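(* Consider a two-player two-action game with payoffs $r_i^{jk}$ ($i\in\{1,2\}$, $j,k\in\{1,2\}$) and let $u_i=r_i^{11}+r_i^{22}-r_i^{12}-r_i^{21}$. If $u_1\neq u_2$, then the unconstrained SA-IGA self-play dynamics $\dot x=F(x)$ on $x=(p_1,p_2,w_1,w_2)\in\mathbb{R}^4$ is non-linear, i.e. the vector field $F:\mathbb{R}^4\to\mathbb{R}^4$ is not an affine function of $(p_1,p_2,w_1,w_2)$.
   Context: Two players $i\in\{1,2\}$, each with actions $1,2$; $r_i^{jk}$ is the payoff of player $i$ when player $i$ plays action $j$ and its opponent $-i$ plays action $k$. Player $i$'s mixed strategy is given by $p_i\in[0,1]$, its probability of playing action 1. The expected payoff of player $i$ is $V_i(p_1,p_2)=\sum_{j,k}\pi_i(j)\pi_{-i}(k)r_i^{jk}$ with $\pi_i(1)=p_i,\ \pi_i(2)=1-p_i$. The social payoff is $V^{soc}=\frac{1}{2}(V_1+V_2)$. Each player $i$ has a social attitude $w_i\in[0,1]$ and overall payoff $\tilde V_i=(1-w_i)V_i+w_iV^{soc}$. The unconstrained SA-IGA dynamics (both players using SA-IGA) is the system $\dot p_i=\frac{\partial \tilde V_i}{\partial p_i}$ (partial derivative with respect to the player's own $p_i$, all other variables fixed), $\dot w_i=\varepsilon\,(V_i-V^{soc})$, $i\in\{1,2\}$, where $\varepsilon>0$ is a constant (ratio of learning rates of $w$ and $p$). Write this as $\dot x=F(x)$ with $x=(p_1,p_2,w_1,w_2)$. *)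

(* Defs.v *)
From HB Require Import structures.
From mathcomp Require Import all_boot all_order all_algebra.
From mathcomp Require Import all_classical all_reals all_analysis.
Set Implicit Arguments. Unset Strict Implicit. Unset Printing Implicit Defensive.
Import Order.TTheory GRing.Theory Num.Theory.
Local Open Scope ring_scope.

Section SAIGA.
Variable R : realType.

(* Payoffs: [r i j k] = r_{i+1}^{(j+1)(k+1)}: payoff of player i (0-indexed)
   when it plays action j and its opponent plays action k (0-indexed). *)
Definition payoffs := 'I_2 -> 'I_2 -> 'I_2 -> R.

Definition mixed (p : R) (j : 'I_2) : R := if val j == 0%N then p else 1 - p.

Definition player1 : 'I_2 := ord0.
Definition player2 : 'I_2 := inord 1.

Definition V1 (r : payoffs) (p1 p2 : R) : R :=
  \sum_(j < 2) \sum_(k < 2) mixed p1 j * mixed p2 k * r player1 j k.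
Definition V2 (r : payoffs) (p1 p2 : R) : R :=
  \sum_(j < 2) \sum_(k < 2) mixed p2 j * mixed p1 k * r player2 j k.
Definition Vsoc (r : payoffs) (p1 p2 : R) : R := (V1 r p1 p2 + V2 r p1 p2) / 2.

Definition Vt1 (r : payoffs) (w1 p1 p2 : R) : R :=
  (1 - w1) * V1 r p1 p2 + w1 * Vsoc r p1 p2.
Definition Vt2 (r : payoffs) (w2 p1 p2 : R) : R :=
  (1 - w2) * V2 r p1 p2 + w2 * Vsoc r p1 p2.

Definition xp1 (x : 'rV[R]_4) := x ord0 (inord 0).
Definition xp2 (x : 'rV[R]_4) := x ord0 (inord 1).
Definition xw1 (x : 'rV[R]_4) := x ord0 (inord 2).
Definition xw2 (x : 'rV[R]_4) := x ord0 (inord 3).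

Definition SAIGA_field (r : payoffs) (eps : R) (x : 'rV[R]_4) : 'rV[R]_4 :=
  \row_(m < 4)
    match val m with
    | 0%N => derive1 (fun q => Vt1 r (xw1 x) q (xp2 x)) (xp1 x)
    | 1%N => derive1 (fun q => Vt2 r (xw2 x) (xp1 x) q) (xp2 x)
    | 2%N => eps * (V1 r (xp1 x) (xp2 x) - Vsoc r (xp1 x) (xp2 x))
    | _ => eps * (V2 r (xp1 x) (xp2 x) - Vsoc r (xp1 x) (xp2 x))
    end.

Definition u (r : payoffs) (i : 'I_2) : R :=
  r i (inord 0) (inord 0) + r i (inord 1) (inord 1)
  - r i (inord 0) (inord 1) - r i (inord 1) (inord 0).

Definition affine4 (G : 'rV[R]_4 -> 'rV[R]_4) : Prop :=
  exists (A : 'M[R]_4) (b : 'rV[R]_4), forall x, G x = x *m A + b.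

End SAIGA.

(* Main.v *)
Require Import Defs.
From mathcomp Require Import all_boot all_order all_algebra.
From mathcomp Require Import all_classical all_reals all_analysis.
From mathcomp Require Import ring lra.
Import GRing.Theory Num.Theory.
Local Open Scope ring_scope.

Lemma sum2 (R : realType) (F : 'I_2 -> R) : \sum_(j < 2) F j = F ord0 + F ord_max.
Proof.
rewrite big_ord_recr big_ord_recr big_ord0 /= add0r.
by congr (F _ + F _); apply: val_inj.
Qed.

Definition xv {R : realType} (a b : R) : 'rV[R]_4 :=
  \row_(m < 4) (if val m == 0%N then a else if val m == 1%N then b else 0).

Lemma fld2 (R : realType) (r : payoffs R) (eps a b : R) :
  (SAIGA_field r eps (xv a b)) ord0 (inord 2) =
  eps * ((V1 r a b - V2 r a b) / 2).
Proof.
rewrite mxE.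
have -> : val (inord 2 : 'I_4) = 2%N by rewrite /= inordK.
have h1 : xp1 (xv a b) = a.
 by rewrite /xp1 /xv mxE /= inordK.
have h2 : xp2 (xv a b) = b by rewrite /xp2 /xv mxE /= inordK.
rewrite h1 h2 /Vsoc.
by field.
Qed.

Theorem theorem1 (R : realType) (r : payoffs R) (eps : R) :
  0 < eps -> u r player1 != u r player2 ->
  ~ affine4 (SAIGA_field r eps).
Proof.
move=> he hu [A [b hG]].
have hx : xv 1 1 + xv 0 0 = xv 1 0 + xv 0 (1:R).
  apply/rowP => m; rewrite !mxE.
  by case: (val m == 0%N); case: (val m == 1%N); rewrite ?addr0 ?add0r.
have : SAIGA_field r eps (xv 1 1) + SAIGA_field r eps (xv 0 0)
     = SAIGA_field r eps (xv 1 0) + SAIGA_field r eps (xv 0 1).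
  rewrite !hG addrACA -mulmxDl hx mulmxDl; by rewrite addrACA.
move/(congr1 (fun M : 'rV[R]_4 => M ord0 (inord 2))).
rewrite [LHS]mxE [RHS]mxE !fld2.
have e0 : (inord 0 : 'I_2) = ord0 by apply: val_inj; rewrite /= inordK.
have e1 : (inord 1 : 'I_2) = ord_max by apply: val_inj; rewrite /= inordK.
move: hu; rewrite /u e0 e1 /V1 /V2 !sum2 /mixed /=.
rewrite !subrr !subr0 ?mul0r ?mulr0 ?mul1r ?mulr1 ?mul0r ?add0r ?addr0.
move=> hu h; rewrite -!mulrDr in h; move/(mulfI (lt0r_neq0 he)): h => h.
apply: (negP hu); apply/eqP.
set a1 := r player1 ord0 ord0 in h *. set a2 := r player1 ord0 ord_max in h *.
set a3 := r player1 ord_max ord0 in h *. set a4 := r player1 ord_max ord_max in h *.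
set b1 := r player2 ord0 ord0 in h *. set b2 := r player2 ord0 ord_max in h *.
set b3 := r player2 ord_max ord0 in h *. set b4 := r player2 ord_max ord_max in h *.
lra.
Qed.
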